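(* Let $G=(V,E)$ be a graph with arboricity $\alpha$, let $\mu$ be an orientation of its edges with out-degree at most $2\alpha$, let $h\le\log\alpha$, and consider Procedure Oriented Edge-Coloring$(G,\mu,h)$. For every $0\le i\le h$, every graph $G^{(i)}$ computed after $i$ levels of recursion, and every $v\in V$, $$\frac{\mathrm{indeg}(v)}{2^i}-1\le\mathrm{indeg}^{(i)}(v)\le\frac{\mathrm{indeg}(v)}{2^i}+1\quad\text{and}\quad\frac{\mathrm{outdeg}(v)}{2^i}-1\le\mathrm{outdeg}^{(i)}(v)\le\frac{\mathrm{outdeg}(v)}{2^i}+1,$$ where $\mathrm{indeg},\mathrm{outdeg}$ are taken in $G$ and $\mathrm{indeg}^{(i)},\mathrm{outdeg}^{(i)}$ in $G^{(i)}$, with respect to $\mu$.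
   Context: Logarithms are base 2. The arboricity of $G$ is $\max_{S\subseteq V,|S|\ge2}\lceil |E(G[S])|/(|S|-1)\rceil$. An oriented degree-splitting of $(H,\mu)$ with discrepancy $\kappa$ is a partition $(E_1,E_2)$ of $E(H)$ such that for every vertex $v$, the numbers of incoming edges of $v$ in $E_1$ and in $E_2$ differ by at most $\kappa$, and likewise for outgoing edges. Procedure Oriented Edge-Coloring$(H,\mu,h)$: if $h=0$, return a proper $(\Delta(H)+1)$-edge-coloring of $H$ from a base-case subroutine; otherwise compute an oriented degree-splitting $(E_1,E_2)$ of $(H,\mu)$ with discrepancy at most 1, recursively call Oriented Edge-Coloring$(H_1,\mu,h-1)$ and Oriented Edge-Coloring$(H_2,\mu,h-1)$ on $H_1=(V,E_1)$, $H_2=(V,E_2)$ (with the orientation induced by $\mu$), and merge the colorings using disjoint palettes. $G^{(0)}=G$, and a graph computed after $i$ levels of recursion is any $H_1$ or $H_2$ produced from a graph computed after $i-1$ levels. *)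

(* Defs.v *)
From HB Require Import structures.
From mathcomp Require Import all_boot all_order all_algebra.
Set Implicit Arguments. Unset Strict Implicit. Unset Printing Implicit Defensive.
Import Order.TTheory GRing.Theory Num.Theory.

(* A (simple, undirected) graph on a finite vertex type V is a symmetric,
   irreflexive relation e.  An oriented (sub)graph is a set of arcs (u,v)
   = "edge directed from u to v". *)

Section Graphs.
Variable V : finType.

Definition simple_graph (e : rel V) : Prop :=
  (forall u, ~~ e u u) /\ (forall u v, e u v = e v u).

Definition orientation_of (e : rel V) (mu : {set V * V}) : Prop :=
  (forall a, a \in mu -> e a.1 a.2) /\
  (forall u v, e u v -> ((u, v) \in mu) (+) ((v, u) \in mu)).

Definition edges_in (e : rel V) (S : {set V}) : {set {set V}} :=
  [set [set u; v] | u in S, v in S & e u v].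

Definition ceil_div (m n : nat) : nat := (m + n.-1) %/ n.

Definition arboricity (e : rel V) : nat :=
  \max_(S : {set V} | 1 < #|S|) ceil_div #|edges_in e S| (#|S| - 1).

Definition indeg (H : {set V * V}) (v : V) : nat := #|[set a in H | a.2 == v]|.
Definition outdeg (H : {set V * V}) (v : V) : nat := #|[set a in H | a.1 == v]|.

Definition close (k m n : nat) : bool := (m <= n + k) && (n <= m + k).

Definition oriented_degree_splitting (H E1 E2 : {set V * V}) (kappa : nat) : Prop :=
  [/\ E1 :|: E2 = H, E1 :&: E2 = set0,
      (forall v, close kappa (indeg E1 v) (indeg E2 v)) &
      (forall v, close kappa (outdeg E1 v) (outdeg E2 v))].

(* computed_after mu i H : H is a graph computed after i levels of recursion
   of Procedure Oriented Edge-Coloring started at (G, mu); the orientation of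
   H is the one induced by mu (H is a set of arcs of mu). *)
Inductive computed_after (mu : {set V * V}) : nat -> {set V * V} -> Prop :=
  | computed0 : computed_after mu 0 mu
  | computed_left i H E1 E2 :
      computed_after mu i H -> oriented_degree_splitting H E1 E2 1 ->
      computed_after mu i.+1 E1
  | computed_right i H E1 E2 :
      computed_after mu i H -> oriented_degree_splitting H E1 E2 1 ->
      computed_after mu i.+1 E2.

End Graphs.

(* Main.v *)
Require Import Defs.
From HB Require Import structures.
From mathcomp Require Import all_boot all_order all_algebra.
From mathcomp Require Import lra zify.
Import Order.TTheory GRing.Theory Num.Theory.
Local Open Scope ring_scope.

Lemma card_split (V : finType) (E1 E2 : {set V * V}) (P : pred (V * V)) :
  E1 :&: E2 = set0 ->
  #|[set a in E1 :|: E2 | P a]| = (#|[set a in E1 | P a]| + #|[set a in E2 | P a]|)%N.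
Proof.
move=> H0.
have -> : [set a in E1 :|: E2 | P a] = [set a in E1 | P a] :|: [set a in E2 | P a].
  by apply/setP => a; rewrite !inE andb_orl.
rewrite cardsU.
have -> : [set a in E1 | P a] :&: [set a in E2 | P a] = set0.
  apply/setP => a; rewrite !inE.
  have : a \in E1 :&: E2 = false by rewrite H0 inE.
  by rewrite inE; case: (a \in E1); case: (a \in E2); case: (P a).
by rewrite cards0 subn0.
Qed.

Lemma step (d x y : nat) (i : nat) :
  (d%:R / 2%:R ^+ i - 1 <= (x%:R : rat)) /\ ((x%:R : rat) <= d%:R / 2%:R ^+ i + 1) ->
  (2 * y <= x + 1)%N -> (x <= 2 * y + 1)%N ->
  (d%:R / 2%:R ^+ i.+1 - 1 <= (y%:R : rat)) /\ ((y%:R : rat) <= d%:R / 2%:R ^+ i.+1 + 1).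
Proof.
move=> [h1 h2] l1 l2.
have e : d%:R / 2%:R ^+ i.+1 = (d%:R / 2%:R ^+ i) / 2 :> rat.
  by rewrite exprS invfM mulrA [_ / 2]mulrC mulrA [_ * d%:R]mulrC.
rewrite e.
have l1' : 2 * (y%:R : rat) <= x%:R + 1.
  have : ((2 * y)%N%:R : rat) <= (x + 1)%N%:R by rewrite ler_nat.
  by rewrite natrM natrD.
have l2' : (x%:R : rat) <= 2 * y%:R + 1.
  have : (x%:R : rat) <= (2 * y + 1)%N%:R by rewrite ler_nat.
  by rewrite natrD natrM.
move: h1 h2 l1' l2'; set t := d%:R / _; move=> h1 h2 l1' l2'.
split; lra.
Qed.

Lemma main_gen (V : finType) (mu : {set V * V}) i Hi :
  computed_after mu i Hi ->
  forall v : V,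
    (((indeg mu v)%:R / 2%:R ^+ i - 1 <= ((indeg Hi v)%:R : rat)) /\
    (((indeg Hi v)%:R : rat) <= (indeg mu v)%:R / 2%:R ^+ i + 1)) /\
    (((outdeg mu v)%:R / 2%:R ^+ i - 1 <= ((outdeg Hi v)%:R : rat)) /\
    (((outdeg Hi v)%:R : rat) <= (outdeg mu v)%:R / 2%:R ^+ i + 1)).
Proof.
elim=> [|j H E1 E2 _ IH [hU hI hin hout]|j H E1 E2 _ IH [hU hI hin hout]] v.
- by rewrite expr0 divr1; split; split; lra.
- have [[a1 a2] [b1 b2]] := IH v.
  have ei : indeg H v = (indeg E1 v + indeg E2 v)%N by rewrite /indeg -hU card_split.
  have eo : outdeg H v = (outdeg E1 v + outdeg E2 v)%N by rewrite /outdeg -hU card_split.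
  move: (hin v) (hout v); rewrite /close => /andP[c1 c2] /andP[c3 c4].
  split; [apply: (step _ _ (indeg E1 v) _ (conj a1 a2)) | apply: (step _ _ (outdeg E1 v) _ (conj b1 b2))]; lia.
- have [[a1 a2] [b1 b2]] := IH v.
  have ei : indeg H v = (indeg E1 v + indeg E2 v)%N by rewrite /indeg -hU card_split.
  have eo : outdeg H v = (outdeg E1 v + outdeg E2 v)%N by rewrite /outdeg -hU card_split.
  move: (hin v) (hout v); rewrite /close => /andP[c1 c2] /andP[c3 c4].
  split; [apply: (step _ _ (indeg E2 v) _ (conj a1 a2)) | apply: (step _ _ (outdeg E2 v) _ (conj b1 b2))]; lia.
Qed.

Theorem lemma4p8 (V : finType) (e : rel V) (mu : {set V * V}) (h : nat) :
  simple_graph e ->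
  orientation_of e mu ->
  (forall v, (outdeg mu v <= 2 * arboricity e)%N) ->
  (2 ^ h <= arboricity e)%N ->   (* h <= log2 (arboricity) *)
  forall (i : nat) (Hi : {set V * V}), (i <= h)%N ->
  computed_after mu i Hi ->
  forall v : V,
    ((indeg mu v)%:R / 2%:R ^+ i - 1 <= ((indeg Hi v)%:R : rat)) /\
    (((indeg Hi v)%:R : rat) <= (indeg mu v)%:R / 2%:R ^+ i + 1) /\
    ((outdeg mu v)%:R / 2%:R ^+ i - 1 <= ((outdeg Hi v)%:R : rat)) /\
    (((outdeg Hi v)%:R : rat) <= (outdeg mu v)%:R / 2%:R ^+ i + 1).
Proof.
move=> _ _ _ _ i Hi _ hc v.
by have [[? ?] [? ?]] := main_gen _ _ _ _ hc v.
Qed.
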